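(* Let $H$ be a finite group and $G$ a finitely generated residually finite group. Let $\bar w$ be a finite system of equations belonging to $Sys(Fin)$. Then $\bar w$ is solvable over the wreath product $H\wr G$.
   Context: Let $\bar y=(y_1,y_2,\dots)$ (constants) and $\bar x=(x_1,x_2,\dots)$ (variables) be countable sets of symbols and $F=F(\bar y,\bar x)$ the free group on them. A system of equations is a tuple $\bar w\in F^r(y_1,\dots,y_k,x_1,\dots,x_n)$ for some $k,n,r$; by substitution it defines a map $G^k\times G^n\to G^r$ for any group $G$, and $\bar w=1$ means all $r$ coordinates equal $1$. The system $\bar w$ is solvable in a group $G$ if for every $\bar a\in G^k$ there is $\bar x\in G^n$ with $\bar w(\bar a,\bar x)=1$. It is solvable over a group $G$ if there is a group $L\ge G$ such that for every $\bar a\in G^k$ there is $\bar x\in L^n$ with $\bar w(\bar a,\bar x)=1$. $Sys(Fin)$ denotes the set of finite systems of equations that are solvable in every finite group. The wreath product $H\wr G$ is the semidirect product $H^G\rtimes G$ (with $H^G$ all functions $G\to H$, pointwise multiplication), with action $(g.f)(x)=f(xg)$ and multiplication $(f,g)(f',g')=(f\,(g.f'),gg')$. *)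

(* Defs.v *)
From Stdlib Require Import FunctionalExtensionality List.
From mathcomp Require Import all_boot.

Set Implicit Arguments.
Unset Strict Implicit.
Unset Printing Implicit Defensive.

Record Grp := {
  gcarrier :> Type;
  gmul : gcarrier -> gcarrier -> gcarrier;
  ginv : gcarrier -> gcarrier;
  gone : gcarrier;
  gmulA : forall x y z, gmul x (gmul y z) = gmul (gmul x y) z;
  gmul1l : forall x, gmul gone x = x;
  gmul1r : forall x, gmul x gone = x;
  gmulVl : forall x, gmul (ginv x) x = gone;
  gmulVr : forall x, gmul x (ginv x) = gone
}.
Arguments gmul {g}. Arguments ginv {g}. Arguments gone {g}.

Definition finite_grp (G : Grp) : Prop := exists l : list G, forall g : G, In g l.

Definition is_hom (G K : Grp) (f : G -> K) : Prop :=
  forall x y : G, f (gmul x y) = gmul (f x) (f y).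

(** * Elements of the free group F(y_1..y_k, x_1..x_n), as group words. Evaluation in any
   group factors through the free group, so words represent elements of F. *)
Inductive word (Y X : Type) : Type :=
  | WConst : Y -> word Y X
  | WVar : X -> word Y X
  | WOne : word Y X
  | WMul : word Y X -> word Y X -> word Y X
  | WInv : word Y X -> word Y X.
Arguments WOne {Y X}.

Fixpoint weval (Y X : Type) (G : Grp) (a : Y -> G) (x : X -> G) (w : word Y X) : G :=
  match w with
  | WConst y => a y
  | WVar v => x v
  | WOne => gone
  | WMul u v => gmul (weval a x u) (weval a x v)
  | WInv u => ginv (weval a x u)
  end.

Definition system (k n : nat) := list (word 'I_k 'I_n).

Definition sys_holds (k n : nat) (G : Grp) (w : system k n)
    (a : 'I_k -> G) (x : 'I_n -> G) : Prop :=
  forall u, In u w -> weval a x u = gone.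

Definition solvable_in (k n : nat) (w : system k n) (G : Grp) : Prop :=
  forall a : 'I_k -> G, exists x : 'I_n -> G, sys_holds w a x.

Definition solvable_over (k n : nat) (w : system k n) (G : Grp) : Prop :=
  exists (L : Grp) (iota : G -> L),
    is_hom iota /\ (forall g h, iota g = iota h -> g = h) /\
    forall a : 'I_k -> G, exists x : 'I_n -> L, sys_holds w (fun i => iota (a i)) x.

Definition in_SysFin (k n : nat) (w : system k n) : Prop :=
  forall G : Grp, finite_grp G -> solvable_in w G.

Definition finitely_generated (G : Grp) : Prop :=
  exists (m : nat) (s : 'I_m -> G),
    forall g : G, exists u : word 'I_m False, weval s (fun v : False => match v with end) u = g.

Definition residually_finite (G : Grp) : Prop :=
  forall g : G, g <> gone ->
    exists (Q : Grp) (phi : G -> Q), finite_grp Q /\ is_hom phi /\ phi g <> gone.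

(** * Unrestricted wreath product H wr G = H^G ⋊ G,
   (g.f)(x) = f(x g), (f,g)(f',g') = (f (g.f'), g g'). *)
Definition wr_mul (H G : Grp) (p q : (G -> H) * G) : (G -> H) * G :=
  (fun x => gmul (p.1 x) (q.1 (gmul x p.2)), gmul p.2 q.2).
Definition wr_inv (H G : Grp) (p : (G -> H) * G) : (G -> H) * G :=
  (fun x => ginv (p.1 (gmul x (ginv p.2))), ginv p.2).
Definition wr_one (H G : Grp) : (G -> H) * G := (fun _ => gone, gone).

Lemma wr_mulA (H G : Grp) (p q r : (G -> H) * G) :
  wr_mul p (wr_mul q r) = wr_mul (wr_mul p q) r.
Proof.
case: p q r => [f1 g1] [f2 g2] [f3 g3]; rewrite /wr_mul /=.
f_equal; last by rewrite gmulA.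
apply: functional_extensionality => x; by rewrite !gmulA.
Qed.

Lemma wr_mul1l (H G : Grp) (p : (G -> H) * G) : wr_mul (wr_one H G) p = p.
Proof.
case: p => f g; rewrite /wr_mul /wr_one /=; f_equal; last by rewrite gmul1l.
apply: functional_extensionality => x; by rewrite gmul1l gmul1r.
Qed.

Lemma wr_mul1r (H G : Grp) (p : (G -> H) * G) : wr_mul p (wr_one H G) = p.
Proof.
case: p => f g; rewrite /wr_mul /wr_one /=; f_equal; last by rewrite gmul1r.
apply: functional_extensionality => x; by rewrite gmul1r.
Qed.

Lemma wr_mulVl (H G : Grp) (p : (G -> H) * G) : wr_mul (wr_inv p) p = wr_one H G.
Proof.
case: p => f g; rewrite /wr_mul /wr_inv /wr_one /=; f_equal; last by rewrite gmulVl.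
apply: functional_extensionality => x; by rewrite gmulVl.
Qed.

Lemma wr_mulVr (H G : Grp) (p : (G -> H) * G) : wr_mul p (wr_inv p) = wr_one H G.
Proof.
case: p => f g; rewrite /wr_mul /wr_inv /wr_one /=; f_equal; last by rewrite gmulVr.
apply: functional_extensionality => x; by rewrite -gmulA gmulVr gmul1r gmulVr.
Qed.

Definition wreath (H G : Grp) : Grp :=
  {| gcarrier := (G -> H) * G;
     gmul := @wr_mul H G; ginv := @wr_inv H G; gone := wr_one H G;
     gmulA := @wr_mulA H G; gmul1l := @wr_mul1l H G; gmul1r := @wr_mul1r H G;
     gmulVl := @wr_mulVl H G; gmulVr := @wr_mulVr H G |}.

(* Main.v *)
From Stdlib Require Import List FunctionalExtensionality ClassicalEpsilon ProofIrrelevance Eqdep_dec.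
Require Import Defs.
From mathcomp Require Import all_boot.

Set Implicit Arguments.
Unset Strict Implicit.
Unset Printing Implicit Defensive.

Section GrpFacts.
Variable G : Grp.
Implicit Types x y z : G.

Lemma gmul_cancel_l x y z : gmul x y = gmul x z -> y = z.
Proof.
move=> e; rewrite -(gmul1l y) -(gmul1l z) -(gmulVl x) -!gmulA e //.
Qed.

Lemma ginv_uniq x y : gmul x y = gone -> y = ginv x.
Proof. by move=> e; apply: (@gmul_cancel_l x); rewrite e gmulVr. Qed.

Lemma ginv1 : ginv (gone : G) = gone.
Proof. by symmetry; apply: ginv_uniq; rewrite gmul1l. Qed.

Lemma ginvK x : ginv (ginv x) = x.
Proof. by symmetry; apply: ginv_uniq; rewrite gmulVl. Qed.

Lemma gmulKV x y : gmul (gmul x (ginv y)) y = x.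
Proof. by rewrite -gmulA gmulVl gmul1r. Qed.

Lemma gmulK x y : gmul (gmul x y) (ginv y) = x.
Proof. by rewrite -gmulA gmulVr gmul1r. Qed.

Lemma gmul_eq1 x y : gmul x (ginv y) = gone -> x = y.
Proof. by move=> e; rewrite -(gmulKV x y) e gmul1l. Qed.
End GrpFacts.

Section Hom.
Variables (G K : Grp) (h : G -> K).
Hypothesis hh : is_hom h.

Lemma hom1 : h gone = gone.
Proof.
apply: (@gmul_cancel_l _ (h gone)); by rewrite -hh !gmul1r.
Qed.

Lemma homV x : h (ginv x) = ginv (h x).
Proof. by apply: ginv_uniq; rewrite -hh gmulVr hom1. Qed.

Lemma weval_hom (Y X : Type) (a : Y -> G) (x : X -> G) (u : word Y X) :
  weval (fun i => h (a i)) (fun j => h (x j)) u = h (weval a x u).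
Proof.
elim: u => //= [|u IHu v IHv|u IHu]; first by rewrite hom1.
  by rewrite IHu IHv hh.
by rewrite IHu homV.
Qed.

Lemma sys_hom k n (w : system k n) (a : 'I_k -> G) (x : 'I_n -> G)
  (a' : 'I_k -> K) (x' : 'I_n -> K) :
  (forall i, a' i = h (a i)) -> (forall j, x' j = h (x j)) ->
  sys_holds w a x -> sys_holds w a' x'.
Proof.
move=> ea ex hs u Hu.
have -> : a' = (fun i => h (a i)) by apply: functional_extensionality.
have -> : x' = (fun i => h (x i)) by apply: functional_extensionality.
by rewrite weval_hom hs // hom1.
Qed.
End Hom.

Definition cid := constructive_indefinite_description.
Definition dec (P : Prop) : {P} + {~ P} := excluded_middle_informative P.

Definition fin (A : Type) : Prop := exists l : list A, forall a, In a l.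

Lemma fin_prod (A B : Type) : fin A -> fin B -> fin (A * B).
Proof.
move=> [la Ha] [lb Hb]; exists (list_prod la lb) => [[a b]].
by apply: in_prod.
Qed.

Lemma fin_sum (A B : Type) : fin A -> fin B -> fin (A + B).
Proof.
move=> [la Ha] [lb Hb]; exists (List.map inl la ++ List.map inr lb) => [[a|b]];
apply/in_or_app; [left|right]; exact: in_map.
Qed.

Lemma fin_unit : fin unit.
Proof. by exists [:: tt] => [[]]; left. Qed.

Lemma in_In (T : eqType) (x : T) (s : seq T) : x \in s -> In x s.
Proof. elim: s => //= y s IH; rewrite in_cons => /orP [/eqP ->|/IH]; by [left|right]. Qed.

Lemma fin_ord m : fin 'I_m.
Proof. exists (enum 'I_m) => i; apply: in_In; by rewrite mem_enum. Qed.

Lemma fin_fun (A B : Type) : fin A -> fin B -> fin (A -> B).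
Proof.
move=> [la Ha] [lb Hb].
suff [L HL] : exists L : list (A -> B), forall f, exists f', In f' L /\ forall a, In a la -> f' a = f a.
  exists L => f; have [f' [Hf' e]] := HL f.
  have -> : f = f' by apply: functional_extensionality => a; rewrite e.
  done.
elim: la {Ha} => [|a la [L HL]].
  case: (classic (inhabited (A -> B))) => [[f0]|ni].
    by exists [:: f0] => f; exists f0; split => //; left.
  by exists [::] => f; case: ni; constructor.
exists (flat_map (fun f' => List.map (fun b => fun x => if dec (x = a) then b else f' x) lb) L).
move=> f; have [f' [Hf' e]] := HL f.
exists (fun x => if dec (x = a) then f a else f' x); split.
  apply/in_flat_map; exists f'; split => //.
  by apply: (in_map (fun b => fun x => if dec (x = a) then b else f' x)).
move=> x /= Hx; case: (dec (x = a)) => [ex|ne] /=; first by subst x.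
by apply: e; case: Hx => // ea; case: ne.
Qed.

Lemma fin_lists (C : Type) : fin C -> forall m, exists l : list (list C), forall s : list C, size s = m -> In s l.
Proof.
move=> [lc Hc]; elim=> [|m [l Hl]].
  by exists [:: [::]] => [[|]] //; left.
exists (flat_map (fun c => List.map (cons c) l) lc) => [[|c s]] //= e.
have {}e : size s = m by case: e.
apply/in_flat_map; exists c; split => //; apply: in_map; exact: Hl.
Qed.

Section Koenig.
Variables (B : Type) (level : B -> nat) (parent : B -> B) (T : B -> Prop).
Hypothesis Hlev : forall x, 0 < level x -> level (parent x) = (level x).-1.
Hypothesis Hfin : forall m, exists l, forall x, level x = m -> In x l.
Hypothesis Hne : forall m, exists x, level x = m /\ T x.
Hypothesis Hdown : forall x, 0 < level x -> T x -> T (parent x).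

Definition kdesc d x y := level y = d + level x /\ iter d parent y = x /\ T y.
Definition alive x := T x /\ forall d, exists y, kdesc d x y.

Lemma kmono1 d x : (exists y, kdesc d.+1 x y) -> exists y, kdesc d x y.
Proof.
move=> [y [ly [iy Ty]]]; exists (parent y); split; last split.
- by rewrite Hlev ly.
- by rewrite -iterSr.
- by apply: Hdown; rewrite ?ly.
Qed.

Lemma kmono d D x : d <= D -> (exists y, kdesc D x y) -> exists y, kdesc d x y.
Proof.
elim: D => [|D IH]; first by rewrite leqn0 => /eqP ->.
rewrite leq_eqVlt => /orP [/eqP ->//|]; rewrite ltnS => le h.
by apply: IH => //; apply: kmono1.
Qed.

Lemma level_iter d m y : level y = d + m -> level (iter d parent y) = m.
Proof.
elim: d y => [|d IH] y ly //.
rewrite iterSr; apply: IH; by rewrite Hlev ly.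
Qed.

Lemma not_alive x : ~ alive x -> exists d, ~ exists y, kdesc d x y.
Proof.
move=> na; apply: NNPP => nd; apply: na; split.
  apply: NNPP => nT; apply: nd; exists 0 => [[y [_ [/= -> Ty]]]]; exact: nT.
by move=> d; apply: NNPP => h; apply: nd; exists d.
Qed.

Lemma bound_list (P : B -> Prop) (l : list B) :
  (forall x, In x l -> P x -> exists d, ~ exists y, kdesc d x y) ->
  exists D, forall x, In x l -> P x -> ~ exists y, kdesc D x y.
Proof.
elim: l => [|a l IH] H; first by exists 0.
have [D HD] := IH (fun x hx => H x (or_intror hx)).
case: (classic (P a)) => Pa.
  have [d Hd] := H a (or_introl erefl) Pa.
  exists (maxn d D) => x [<-|hx] px h.
    by apply: Hd; apply: kmono h; rewrite leq_maxl.
  by apply: (HD x hx px); apply: kmono h; rewrite leq_maxr.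
exists D => x [<-|hx] px //; exact: HD.
Qed.

Lemma exists_alive m : exists x, level x = m /\ alive x.
Proof.
apply: NNPP => nh.
have [l Hl] := Hfin m.
have [D HD] := @bound_list (fun x => level x = m) l (fun x _ lx =>
   not_alive (fun al => nh (ex_intro _ x (conj lx al)))).
have [y [ly Ty]] := Hne (D + m).
have lx : level (iter D parent y) = m by exact: level_iter.
apply: (HD _ (Hl _ lx) lx); exists y; split => //; by rewrite lx.
Qed.

Lemma alive_succ x : alive x -> exists x', level x' = (level x).+1 /\ parent x' = x /\ alive x'.
Proof.
move=> al; apply: NNPP => nh.
have [l Hl] := Hfin (level x).+1.
have [D HD] := @bound_list (fun x' => level x' = (level x).+1 /\ parent x' = x) l
  (fun x' _ '(conj lx px) => not_alive (fun al' => nh (ex_intro _ x' (conj lx (conj px al'))))).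
have [y [ly [iy Ty]]] := al.2 D.+1.
have lx' : level (iter D parent y) = (level x).+1 by apply: level_iter; rewrite ly addSnnS.
have px' : parent (iter D parent y) = x by rewrite -iterS.
apply: (HD _ (Hl _ lx') (conj lx' px')); exists y; split => //; by rewrite lx' ly addSnnS.
Qed.

Definition kstep (x : B) (h : alive x) := cid (alive_succ h).

Fixpoint kbuild (m : nat) : {x : B | level x = m /\ alive x} :=
  match m with
  | 0 => cid (exists_alive 0)
  | m'.+1 => let p := kbuild m' in
      let q := kstep (proj2 (proj2_sig p)) in
      exist _ (proj1_sig q)
        (conj (eq_trans (proj1 (proj2_sig q)) (f_equal S (proj1 (proj2_sig p))))
              (proj2 (proj2 (proj2_sig q))))
  end.

Lemma koenig : exists s : nat -> B, forall m, level (s m) = m /\ T (s m) /\ parent (s m.+1) = s m.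
Proof.
exists (fun m => proj1_sig (kbuild m)) => m.
have [lx [Tx _]] := proj2_sig (kbuild m); split => //; split => //.
rewrite /=; set q := kstep _.
exact: (proj1 (proj2 (proj2_sig q))).
Qed.
End Koenig.

Definition trivG : Grp.
refine {| gcarrier := unit; gmul := fun _ _ => tt; ginv := fun _ => tt; gone := tt |};
by do ?case.
Defined.

Definition prod2 (A B : Grp) : Grp.
refine {| gcarrier := (A * B)%type;
          gmul := fun p q => (gmul p.1 q.1, gmul p.2 q.2);
          ginv := fun p => (ginv p.1, ginv p.2);
          gone := (gone, gone) |}.
- by move=> [? ?] [? ?] [? ?] /=; rewrite !gmulA.
- by move=> [? ?] /=; rewrite !gmul1l.
- by move=> [? ?] /=; rewrite !gmul1r.
- by move=> [? ?] /=; rewrite !gmulVl.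
- by move=> [? ?] /=; rewrite !gmulVr.
Defined.

Definition prodN (Q : nat -> Grp) : Grp.
refine {| gcarrier := forall i, Q i;
          gmul := fun p q i => gmul (p i) (q i);
          ginv := fun p i => ginv (p i);
          gone := fun i => gone |}.
- by move=> x y z; apply: functional_extensionality_dep => i; rewrite gmulA.
- by move=> x; apply: functional_extensionality_dep => i; rewrite gmul1l.
- by move=> x; apply: functional_extensionality_dep => i; rewrite gmul1r.
- by move=> x; apply: functional_extensionality_dep => i; rewrite gmulVl.
- by move=> x; apply: functional_extensionality_dep => i; rewrite gmulVr.
Defined.

Section PWR.
Variables (H P : Grp) (O : Type) (act : O -> P -> O).
Hypothesis act1 : forall o, act o gone = o.
Hypothesis actM : forall o p q, act (act o p) q = act o (gmul p q).

Definition pwr : Grp.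
refine {| gcarrier := ((O -> H) * P)%type;
          gmul := fun p q => (fun o => gmul (p.1 o) (q.1 (act o p.2)), gmul p.2 q.2);
          ginv := fun p => (fun o => ginv (p.1 (act o (ginv p.2))), ginv p.2);
          gone := (fun _ => gone, gone) |}.
- move=> [f1 g1] [f2 g2] [f3 g3] /=; f_equal; last by rewrite gmulA.
  by apply: functional_extensionality => o; rewrite actM !gmulA.
- move=> [f g] /=; f_equal; last by rewrite gmul1l.
  by apply: functional_extensionality => o; rewrite gmul1l act1.
- move=> [f g] /=; f_equal; last by rewrite gmul1r.
  by apply: functional_extensionality => o; rewrite gmul1r.
- move=> [f g] /=; f_equal; last by rewrite gmulVl.
  by apply: functional_extensionality => o; rewrite gmulVl.
- move=> [f g] /=; f_equal; last by rewrite gmulVr.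
  by apply: functional_extensionality => o; rewrite actM gmulVr act1 gmulVr.
Defined.
End PWR.

Section HPart.
Variables (H K : Grp) (k n : nat).
Variables (b : 'I_k -> K) (c : 'I_n -> K).

Fixpoint hp (F : 'I_k -> K -> H) (Phi : 'I_n -> K -> H) (u : word 'I_k 'I_n) (z : K) : H :=
  match u with
  | WConst i => F i z
  | WVar j => Phi j z
  | WOne => gone
  | WMul u v => gmul (hp F Phi u z) (hp F Phi v (gmul z (weval b c u)))
  | WInv u => ginv (hp F Phi u (gmul z (ginv (weval b c u))))
  end.

Fixpoint pts (u : word 'I_k 'I_n) (z : K) : list K :=
  match u with
  | WConst _ => [:: z]
  | WVar _ => [:: z]
  | WOne => [::]
  | WMul u v => pts u z ++ pts v (gmul z (weval b c u))
  | WInv u => pts u (gmul z (ginv (weval b c u)))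
  end.

Lemma pts_mul u v z : pts (WMul u v) z = pts u z ++ pts v (gmul z (weval b c u)).
Proof. by []. Qed.
Lemma pts_inv u z : pts (WInv u) z = pts u (gmul z (ginv (weval b c u))).
Proof. by []. Qed.
Lemma weval_mul (u v : word 'I_k 'I_n) : weval b c (WMul u v) = gmul (weval b c u) (weval b c v).
Proof. by []. Qed.
Lemma weval_inv (u : word 'I_k 'I_n) : weval b c (WInv u) = ginv (weval b c u).
Proof. by []. Qed.

Lemma weval_wreath F Phi u :
  @weval _ _ (wreath H K) (fun i => (F i, b i)) (fun j => (Phi j, c j)) u
  = (hp F Phi u, weval b c u).
Proof.
elim: u => //= [u IHu v IHv|u IHu]; by rewrite ?IHu ?IHv.
Qed.

Lemma hp_local F Phi F' Phi' u z :
  (forall p, In p (pts u z) -> (forall i, F i p = F' i p) /\ (forall j, Phi j p = Phi' j p)) ->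
  hp F Phi u z = hp F' Phi' u z.
Proof.
elim: u z => /= [i|j||u IHu v IHv|u IHu] z h.
- by rewrite (proj1 (h z (or_introl erefl))).
- by rewrite (proj2 (h z (or_introl erefl))).
- done.
- rewrite IHu ?IHv // => p hp'; apply: h; apply/in_or_app; by [right|left].
- by rewrite IHu.
Qed.

Lemma hp_triv F Phi u z :
  (forall p, In p (pts u z) -> (forall i, F i p = gone) /\ (forall j, Phi j p = gone)) ->
  hp F Phi u z = gone.
Proof.
elim: u z => /= [i|j||u IHu v IHv|u IHu] z h.
- by rewrite (proj1 (h z (or_introl erefl))).
- by rewrite (proj2 (h z (or_introl erefl))).
- done.
- rewrite IHu ?IHv ?gmul1l // => p hp'; apply: h; apply/in_or_app; by [right|left].
- by rewrite IHu ?ginv1.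
Qed.
End HPart.

Section HPartTransfer.
Variables (H K P : Grp) (k n : nat) (pi : K -> P).
Hypothesis hpi : is_hom pi.
Variables (b : 'I_k -> K) (c : 'I_n -> K) (b' : 'I_k -> P) (c' : 'I_n -> P).
Hypothesis eb : forall i, b' i = pi (b i).
Hypothesis ec : forall j, c' j = pi (c j).

Lemma hp_transfer (F : 'I_k -> K -> H) Phi F' Phi' u z :
  (forall p, In p (pts b c u z) -> (forall i, F' i (pi p) = F i p) /\ (forall j, Phi' j (pi p) = Phi j p)) ->
  hp b' c' F' Phi' u (pi z) = hp b c F Phi u z.
Proof.
have ew : forall u, weval b' c' u = pi (weval b c u).
  move=> v; rewrite -weval_hom //; congr weval; exact: functional_extensionality.
elim: u z => /= [i|j||u IHu v IHv|u IHu] z h.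
- by rewrite (proj1 (h z (or_introl erefl))).
- by rewrite (proj2 (h z (or_introl erefl))).
- done.
- rewrite ew -hpi IHu ?IHv // => p hp'; apply: h; apply/in_or_app; by [right|left].
- by rewrite ew -(homV hpi) -hpi IHu.
Qed.
End HPartTransfer.

Section WordEnum.
Variables (Y X : Type) (cY : Y -> nat) (dY : nat -> option Y) (cX : X -> nat) (dX : nat -> option X).
Hypothesis eY : forall y, dY (cY y) = Some y.
Hypothesis eX : forall x, dX (cX x) = Some x.

Fixpoint wenc (u : word Y X) : GenTree.tree nat :=
  match u with
  | WConst y => GenTree.Node 0 [:: GenTree.Leaf (cY y)]
  | WVar x => GenTree.Node 1 [:: GenTree.Leaf (cX x)]
  | WOne => GenTree.Node 2 [::]
  | WMul u v => GenTree.Node 3 [:: wenc u; wenc v]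
  | WInv u => GenTree.Node 4 [:: wenc u]
  end.

Fixpoint wdec (t : GenTree.tree nat) : option (word Y X) :=
  match t with
  | GenTree.Node 0 [:: GenTree.Leaf a] => omap (@WConst Y X) (dY a)
  | GenTree.Node 1 [:: GenTree.Leaf a] => omap (@WVar Y X) (dX a)
  | GenTree.Node 2 [::] => Some WOne
  | GenTree.Node 3 [:: t1; t2] =>
      match wdec t1, wdec t2 with Some u, Some v => Some (WMul u v) | _, _ => None end
  | GenTree.Node 4 [:: t1] => omap (@WInv Y X) (wdec t1)
  | _ => None
  end.

Lemma wdecK u : wdec (wenc u) = Some u.
Proof. by elim: u => //= [y|x|u -> v ->|u ->]; rewrite ?eY ?eX. Qed.

Definition wnum (N : nat) : option (word Y X) :=
  match unpickle N with Some t => wdec t | None => None end.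

Lemma wnum_surj u : exists N, wnum N = Some u.
Proof. exists (pickle (wenc u)); by rewrite /wnum pickleK wdecK. Qed.
End WordEnum.

Definition ordc m (i : 'I_m) : nat := i.
Definition ordd m (a : nat) : option 'I_m := insub a.
Lemma orde m (i : 'I_m) : ordd m (ordc i) = Some i.
Proof. by rewrite /ordd /ordc valK. Qed.
Definition falsec (v : False) : nat := match v with end.
Definition falsed (a : nat) : option False := None.
Lemma falsee (v : False) : falsed (falsec v) = Some v.
Proof. by case: v. Qed.
Definition noF (G : Grp) (v : False) : G := match v with end.

Section Main.
Variables (H G : Grp) (k n : nat) (w : system k n).
Hypothesis finH : finite_grp H.
Hypothesis fgG : finitely_generated G.
Hypothesis rfG : residually_finite G.
Hypothesis sysw : in_SysFin w.

Definition gr : nat := proj1_sig (cid fgG).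
Definition gs : 'I_gr -> G := proj1_sig (cid (proj2_sig (cid fgG))).
Lemma gs_spec g : exists u, weval gs (@noF G) u = g.
Proof.
have := proj2_sig (cid (proj2_sig (cid fgG))) g; rewrite -/gr -/gs => -[u hu].
by exists u; rewrite -hu; congr weval; apply: functional_extensionality => -[].
Qed.

Definition enumG (N : nat) : G :=
  match wnum (@ordd gr) falsed N with Some u => weval gs (@noF G) u | None => gone end.

Lemma enumG_surj g : exists N, enumG N = g.
Proof.
have [u hu] := gs_spec g.
have [N hN] := wnum_surj (@orde gr) falsee u.
by exists N; rewrite /enumG hN.
Qed.

Lemma res_ex (g : G) : exists (Q : Grp) (phi : G -> Q),
  finite_grp Q /\ is_hom phi /\ (g <> gone -> phi g <> gone).
Proof.
case: (classic (g = gone)) => [->|ng].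
  exists trivG, (fun _ => tt); split; first by exists [:: tt] => -[]; left.
  by split => // x y.
have [Q [phi [fQ [hphi ne]]]] := rfG ng.
by exists Q, phi.
Qed.

Definition Q (i : nat) : Grp := proj1_sig (cid (res_ex (enumG i))).
Definition phi (i : nat) : G -> Q i := proj1_sig (cid (proj2_sig (cid (res_ex (enumG i))))).
Lemma phi_spec i : finite_grp (Q i) /\ is_hom (phi i) /\ (enumG i <> gone -> phi i (enumG i) <> gone).
Proof. exact: (proj2_sig (cid (proj2_sig (cid (res_ex (enumG i)))))). Qed.

Definition K : Grp := prodN Q.
Definition psi (g : G) : K := fun i => phi i g.

Lemma psi_hom : is_hom psi.
Proof.
move=> x y; apply: functional_extensionality_dep => i.
by rewrite /psi (proj1 (proj2 (phi_spec i))).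
Qed.

Lemma psi_inj g g' : psi g = psi g' -> g = g'.
Proof.
move=> e; apply: gmul_eq1; apply: NNPP => ne.
have [N hN] := enumG_surj (gmul g (ginv g')).
have := proj2 (proj2 (phi_spec N)); rewrite hN => /(_ ne); apply.
have hh := proj1 (proj2 (phi_spec N)).
rewrite hh (homV hh).
have -> : phi N g = phi N g' by exact: (f_equal (fun f => f N) e).
by rewrite gmulVr.
Qed.

Fixpoint P (m : nat) : Grp :=
  match m with 0 => trivG | m'.+1 => prod2 (P m') (Q m') end.

Fixpoint piK (m : nat) : K -> P m :=
  match m with 0 => fun _ => tt | m'.+1 => fun z => (piK m' z, z m') end.

Fixpoint psiP (m : nat) : G -> P m :=
  match m with 0 => fun _ => tt | m'.+1 => fun g => (psiP m' g, phi m' g) end.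

Lemma piK_hom m : is_hom (piK m).
Proof. by elim: m => [|m IH] x y //=; rewrite IH. Qed.

Lemma psiP_hom m : is_hom (psiP m).
Proof. by elim: m => [|m IH] x y //=; rewrite IH (proj1 (proj2 (phi_spec m))). Qed.

Lemma piK_psi m g : piK m (psi g) = psiP m g.
Proof. by elim: m => [|m IH] //=; rewrite IH. Qed.

Lemma piK_eq m z z' : piK m z = piK m z' <-> forall i, i < m -> z i = z' i.
Proof.
elim: m => [|m IH] /=; first by split => // _ [].
split.
  move=> [/IH h e] i; rewrite ltnS leq_eqVlt => /orP [/eqP ->//|]; exact: h.
move=> h; rewrite (proj2 IH) ?h // => i lt; apply: h; exact: ltnW.
Qed.

Lemma K_eq1 (z : K) : (forall m, piK m z = gone) -> z = gone.
Proof.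
move=> h; apply: functional_extensionality_dep => i.
by have := h i.+1 => -[].
Qed.

Lemma finP m : fin (P m).
Proof.
elim: m => [|m IH] /=; first exact: fin_unit.
apply: fin_prod => //; exact: (proj1 (phi_spec m)).
Qed.

Lemma finHt : fin H.
Proof. exact: finH. Qed.

Lemma sep_list (Z : list K) : exists M, forall p p', In p Z -> In p' Z ->
  piK M p = piK M p' -> p = p'.
Proof.
have sep2 : forall p p' : K, exists M, (forall i, i < M -> p i = p' i) -> p = p'.
  move=> p p'; case: (classic (p = p')) => [e|ne]; first by exists 0.
  have [i hi] : exists i, p i <> p' i.
    apply: NNPP => h; apply: ne; apply: functional_extensionality_dep => i.
    apply: NNPP => hi; apply: h; by exists i.
  by exists i.+1 => h; case: hi; apply: h.
have sep1 : forall (p : K) (Z0 : list K), exists M, forall p', In p' Z0 ->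
    (forall i, i < M -> p i = p' i) -> p = p'.
  move=> p; elim => [|a Z0 [M HM]]; first by exists 0.
  have [M' HM'] := sep2 p a.
  exists (maxn M M') => p' [<-|hp] h.
    apply: HM' => i lt; apply: h; by rewrite leq_max lt orbT.
  apply: HM => // i lt; apply: h; by rewrite leq_max lt.
suff : exists M, forall p p', In p Z -> In p' Z -> (forall i, i < M -> p i = p' i) -> p = p'.
  by move=> [M HM]; exists M => p p' hp hp' /piK_eq; apply: HM.
elim: Z => [|a Z [M HM]]; first by exists 0.
have [M1 H1] := sep1 a (a :: Z).
exists (maxn M M1) => p p' [<-|hp] [<-|hp'] h //.
- apply: H1; [by right | move=> i lt; apply: h; by rewrite leq_max lt orbT].
- symmetry; apply: H1; [by right | move=> i lt; symmetry; apply: h; by rewrite leq_max lt orbT].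
- apply: HM => // i lt; apply: h; by rewrite leq_max lt.
Qed.

Definition ext (f : G -> H) (z : K) : H :=
  match dec (exists g, psi g = z) with
  | left h => f (proj1_sig (cid h))
  | right _ => gone
  end.

Lemma ext_psi f g : ext f (psi g) = f g.
Proof.
rewrite /ext; case: (dec _) => [h|nh]; last by case: nh; exists g.
by rewrite (psi_inj (proj2_sig (cid h))).
Qed.

Lemma ext_out f z : ~ (exists g, psi g = z) -> ext f z = gone.
Proof. by rewrite /ext; case: (dec _). Qed.

Definition wemb (p : wreath H G) : wreath H K := (ext p.1, psi p.2).

Lemma iota_hom : is_hom wemb.
Proof.
move=> [f g] [f' g'].
change ((ext (fun x => gmul (f x) (f' (gmul x g))), psi (gmul g g')) =
  ((fun z => gmul (ext f z) (ext f' (gmul z (psi g)))), gmul (psi g) (psi g'))).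
f_equal; last by rewrite psi_hom.
apply: functional_extensionality => z.
case: (classic (exists x, psi x = z)) => [[x <-]|nz].
  by rewrite !ext_psi -psi_hom ext_psi.
rewrite !ext_out ?gmul1l //.
move=> [x hx]; apply: nz; exists (gmul x (ginv g)).
by rewrite psi_hom (homV psi_hom) hx gmulK.
Qed.

Lemma iota_inj p q : wemb p = wemb q -> p = q.
Proof.
case: p q => [f g] [f' g'] [e1 e2]; rewrite (psi_inj e2); f_equal.
apply: functional_extensionality => x.
by rewrite -(ext_psi f) -(ext_psi f') e1.
Qed.

(* ---------- stage 1 : choosing the G-part of the solution ---------- *)
Section Stage1.
Variable gG : 'I_k -> G.

Definition Good m (Y : 'I_n -> P m) :=
  forall D : 'I_k -> P m -> H, exists Phi : 'I_n -> P m -> H,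
    @sys_holds k n (wreath H (P m)) w (fun i => (D i, psiP m (gG i))) (fun j => (Phi j, Y j)).

Arguments Good : clear implicits.
Fixpoint AllGood m : ('I_n -> P m) -> Prop :=
  match m return ('I_n -> P m) -> Prop with
  | 0 => fun Y => @Good 0 Y
  | m'.+1 => fun Y => @Good m'.+1 Y /\ AllGood (fun j => (Y j).1)
  end.

Arguments AllGood : clear implicits.
Lemma AllGood_Good m Y : AllGood m Y -> Good m Y.
Proof. by case: m Y => [|m] Y //= []. Qed.

Fixpoint Om (m : nat) : Type :=
  match m with
  | 0 => (('I_k -> P 0 -> H) * P 0)%type
  | m'.+1 => (Om m' + (('I_k -> P m'.+1 -> H) * P m'.+1))%type
  end.

Fixpoint oact (m : nat) : Om m -> P m -> Om m :=
  match m return Om m -> P m -> Om m with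
  | 0 => fun o p => (o.1, gmul o.2 p)
  | m'.+1 => fun o p => match o with
                       | inl o' => inl (oact o' p.1)
                       | inr sq => inr (sq.1, gmul sq.2 p)
                       end
  end.

Lemma oact1 m o : oact o (gone : P m) = o.
Proof.
elim: m o => [|m IH] /= o; first by case: o => s [].
case: o => [o|[s [q1 q2]]] /=; by rewrite ?IH ?gmul1r.
Qed.

Lemma oactM m o (p q : P m) : oact (oact o p) q = oact o (gmul p q).
Proof.
elim: m o p q => [|m IH] /= o p q; first by case: o => s [].
case: o => [o|[s [r1 r2]]] /=; by rewrite ?IH ?gmulA.
Qed.

Definition top (m : nat) : ('I_k -> P m -> H) -> P m -> Om m :=
  match m return ('I_k -> P m -> H) -> P m -> Om m with
  | 0 => fun s q => (s, q)
  | m'.+1 => fun s q => inr (s, q)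
  end.

Lemma top_act m s q p : oact (@top m s q) p = top s (gmul q p).
Proof. by case: m s q p. Qed.

Fixpoint gen (m : nat) : 'I_k -> Om m -> H :=
  match m return 'I_k -> Om m -> H with
  | 0 => fun i o => o.1 i o.2
  | m'.+1 => fun i o => match o with
                       | inl o' => gen i o'
                       | inr sq => sq.1 i sq.2
                       end
  end.

Lemma gen_top m i s q : gen i (@top m s q) = s i q.
Proof. by case: m s q. Qed.

Definition Gm m : Grp := @pwr H (P m) (Om m) (@oact m) (@oact1 m) (@oactM m).

Lemma finOm m : fin (Om m).
Proof.
have fD : forall m, fin ('I_k -> P m -> H).
  move=> m'; apply: fin_fun; first exact: fin_ord.
  apply: fin_fun; [exact: finP | exact: finH].
elim: m => [|m IH]; first by apply: fin_prod; [exact: (fD 0) | exact: (finP 0)].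
apply: fin_sum => //; apply: fin_prod; [exact: fD | exact: finP].
Qed.

Lemma finGm m : finite_grp (Gm m).
Proof.
have [l hl] : fin ((Om m -> H) * P m).
  apply: fin_prod; [apply: fin_fun; [exact: finOm | exact: finH] | exact: finP].
by exists l.
Qed.

Definition hD m (D : 'I_k -> P m -> H) (p : Gm m) : wreath H (P m) :=
  (fun q => p.1 (top D q), p.2).

Lemma hD_hom m D : is_hom (@hD m D).
Proof.
move=> [f g] [f' g'].
change (((fun q => gmul (f (top D q)) (f' (oact (top D q) g))), gmul g g') =
  ((fun q => gmul (f (top D q)) (f' (top D (gmul q g)))), gmul g g')).
by f_equal; apply: functional_extensionality => q; rewrite top_act.
Qed.

Definition rho m (p : Gm m.+1) : Gm m := (fun o => p.1 (inl o), p.2.1).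

Lemma rho_hom m : is_hom (@rho m).
Proof. by move=> [f g] [f' g']. Qed.

Definition genA m : 'I_k -> Gm m := fun i => (gen i, psiP m (gG i)).

Lemma stage1_gen m (x : 'I_n -> Gm m) : sys_holds w (@genA m) x -> AllGood m (fun j => (x j).2).
Proof.
have good : forall m (x : 'I_n -> Gm m), sys_holds w (@genA m) x -> Good m (fun j => (x j).2).
  move=> m' x' hs D; exists (fun j q => (x' j).1 (top D q)).
  apply: (sys_hom (hD_hom D) _ _ hs) => [i|j] //.
  rewrite /hD /genA /=; f_equal; apply: functional_extensionality => q.
  by rewrite gen_top.
elim: m x => [|m IH] x hs /=; first exact: good.
split; first exact: good.
have := IH (fun j => rho (x j)); apply.
by apply: (sys_hom (@rho_hom m) _ _ hs).
Qed.

Lemma AllGood_ex m : exists Y, AllGood m Y.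
Proof.
have [x hx] := sysw (finGm m) (@genA m).
by exists (fun j => (x j).2); apply: stage1_gen.
Qed.

Definition B1 := {m : nat & 'I_n -> P m}.
Definition par1 (x : B1) : B1 :=
  match x with
  | existT 0 Y => existT _ 0 Y
  | existT m.+1 Y => existT _ m (fun j => (Y j).1)
  end.
Definition T1 (x : B1) := AllGood (projT1 x) (projT2 x).

Lemma stage1_seq : exists s : nat -> B1, forall m,
  projT1 (s m) = m /\ T1 (s m) /\ par1 (s m.+1) = s m.
Proof.
apply: (@koenig B1 (@projT1 _ _) par1 T1).
- by move=> [[|m] Y].
- move=> m; have [l hl] : fin ('I_n -> P m) by apply: fin_fun; [exact: fin_ord | exact: finP].
  exists (List.map (existT _ m) l) => -[m' Y] /= e; subst m'.
  exact: in_map.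
- move=> m; have [Y hY] := AllGood_ex m; by exists (existT _ m Y).
- by move=> [[|m] Y] //= _ [].
Qed.

End Stage1.

(* ---------- stage 2 : the H-part, by compactness ---------- *)
Section Stage2.
Variable a : 'I_k -> wreath H G.
Definition gG (i : 'I_k) : G := (a i).2.

Definition s1 := proj1_sig (cid (stage1_seq gG)).
Lemma s1_spec m : projT1 (s1 m) = m /\ T1 gG (s1 m) /\ par1 (s1 m.+1) = s1 m.
Proof. exact: (proj2_sig (cid (stage1_seq gG)) m). Qed.

Lemma s1_ex m : exists Y : 'I_n -> P m, s1 m = existT _ m Y.
Proof.
have := proj1 (s1_spec m); case: (s1 m) => m' Y /= e; subst m'; by exists Y.
Qed.

Definition Ys m : 'I_n -> P m := proj1_sig (cid (s1_ex m)).
Lemma Ys_eq m : s1 m = existT _ m (Ys m).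
Proof. exact: (proj2_sig (cid (s1_ex m))). Qed.

Lemma Ys_good m : @Good gG m (Ys m).
Proof.
have := proj1 (proj2 (s1_spec m)); rewrite Ys_eq /T1 /=; exact: AllGood_Good.
Qed.

Lemma Ys_coh m j : (Ys m.+1 j).1 = Ys m j.
Proof.
have := proj2 (proj2 (s1_spec m)); rewrite !Ys_eq /= => e.
have := inj_pair2_eq_dec nat PeanoNat.Nat.eq_dec _ _ _ _ e => /(f_equal (fun f => f j)).
done.
Qed.

Definition yK (j : 'I_n) : K := fun i => (Ys i.+1 j).2.

Lemma piK_y m j : piK m (yK j) = Ys m j.
Proof.
elim: m => [|m IH] /=; first by destruct (Ys 0 j).
rewrite IH -Ys_coh /yK; by destruct (Ys m.+1 j).
Qed.

Definition bK (i : 'I_k) : K := psi (gG i).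
Definition FK (i : 'I_k) : K -> H := ext (a i).1.

Definition inU (z : K) := exists v : word 'I_gr 'I_n, weval (fun l => psi (gs l)) yK v = z.

Lemma inU1 : inU gone. Proof. by exists WOne. Qed.
Lemma inUM x y : inU x -> inU y -> inU (gmul x y).
Proof. by move=> [u <-] [v <-]; exists (WMul u v). Qed.
Lemma inUV x : inU x -> inU (ginv x).
Proof. by move=> [u <-]; exists (WInv u). Qed.

Lemma inU_psi g : inU (psi g).
Proof.
have [u <-] := gs_spec g.
elim: u => /= [l|[]||u IHu v IHv|u IHu].
- by exists (WConst _ l).
- by rewrite (hom1 psi_hom); exact: inU1.
- by rewrite psi_hom; apply: inUM.
- by rewrite (homV psi_hom); apply: inUV.
Qed.

Lemma inU_w u : inU (weval bK yK u).
Proof.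
elim: u => /= [i|j||u IHu v IHv|u IHu].
- exact: inU_psi.
- by exists (WVar _ j).
- exact: inU1.
- exact: inUM.
- exact: inUV.
Qed.

Lemma pts_coset u z p : In p (pts bK yK u z) -> exists g, inU g /\ p = gmul z g.
Proof.
elim: u z => [i|j||u IHu v IHv|u IHu] z.
- by move=> [<-|[]]; exists (gone : K); split; [exact: inU1 | rewrite gmul1r].
- by move=> [<-|[]]; exists (gone : K); split; [exact: inU1 | rewrite gmul1r].
- done.
- rewrite pts_mul => /(in_app_or _ _ _) [/(IHu z) //|/(IHv (gmul z (weval bK yK u))) [g [hg ->]]].
  exists (gmul (weval bK yK u) g); split; [exact: inUM (inU_w u) hg | by rewrite gmulA].
- rewrite pts_inv => /(IHu _) [g [hg ->]]; exists (gmul (ginv (weval bK yK u)) g); split.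
    exact: inUM (inUV (inU_w u)) hg.
  by rewrite gmulA.
Qed.

Definition pt (N : nat) : K :=
  match wnum (@ordd gr) (@ordd n) N with
  | Some v => weval (fun l => psi (gs l)) yK v
  | None => gone
  end.

Lemma inU_pt N : inU (pt N).
Proof. rewrite /pt; case: (wnum _ _ _) => [v|]; [by exists v | exact: inU1]. Qed.

Lemma pt_surj z : inU z -> exists N, pt N = z.
Proof.
move=> [v <-]; have [N hN] := wnum_surj (@orde gr) (@orde n) v.
by exists N; rewrite /pt hN.
Qed.

Definition C := ('I_n -> H).
Definition c0 : C := fun _ => gone.

Definition PhiL (l : list C) (j : 'I_n) (z : K) : H :=
  match dec (exists i, i < size l /\ pt i = z) with
  | left h => nth c0 l (proj1_sig (cid h)) j
  | right _ => gone
  end.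

Definition consis (l : list C) := forall i i', i < size l -> i' < size l -> pt i = pt i' ->
  nth c0 l i = nth c0 l i'.

Lemma PhiL_pt l i j : consis l -> i < size l -> PhiL l j (pt i) = nth c0 l i j.
Proof.
move=> hc hi; rewrite /PhiL; case: (dec _) => [h|nh]; last by case: nh; exists i.
have [h1 h2] := proj2_sig (cid h).
by rewrite (hc _ _ h1 hi h2).
Qed.

Definition T2 (l : list C) := consis l /\
  forall i, i < size l -> forall u, In u w ->
    (forall p, In p (pts bK yK u (pt i)) -> exists i', i' < size l /\ pt i' = p) ->
    hp bK yK FK (PhiL l) u (pt i) = gone.

Definition par2 (l : list C) : list C := take (size l).-1 l.

Lemma size_par2 l : size (par2 l) = (size l).-1.
Proof. by rewrite /par2 size_take; case: (size l) => //= m; rewrite ltnSn. Qed.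

Lemma nth_par2 l i : i < (size l).-1 -> nth c0 (par2 l) i = nth c0 l i.
Proof. by move=> h; rewrite /par2 nth_take. Qed.

Lemma T2_down l : 0 < size l -> T2 l -> T2 (par2 l).
Proof.
move=> sl [hc he]; rewrite /T2 size_par2.
have lt : forall i, i < (size l).-1 -> i < size l.
  by move=> i; case: (size l) sl => // m _ /= h; apply: ltnW.
have consp : consis (par2 l).
  move=> i1 i2; rewrite size_par2 => h1 h2 e; rewrite !nth_par2 //; apply: hc => //; exact: lt.
split => // i hi u hu hpts.
rewrite -(he i (lt _ hi) u hu); last first.
  move=> p hp; have [i' [hi' e]] := hpts p hp; exists i'; split => //; exact: lt.
apply: hp_local => p hp; split => // j.
have [i' [hi' <-]] := hpts p hp.
rewrite PhiL_pt ?size_par2 // PhiL_pt //; last exact: lt.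
by rewrite nth_par2.
Qed.

Lemma bound_idx (Z : list K) : (forall p, In p Z -> exists i, pt i = p) ->
  exists N, forall p, In p Z -> exists i, i < N /\ pt i = p.
Proof.
elim: Z => [|z Z IH] h; first by exists 0.
have [N HN] := IH (fun p hp => h p (or_intror hp)).
have [i hi] := h z (or_introl erefl).
exists (maxn N i.+1) => p [<-|hp].
  by exists i; split => //; rewrite leq_max ltnSn orbT.
have [i' [hi' e]] := HN p hp; exists i'; split => //; by rewrite leq_max hi'.
Qed.

Lemma T2_ne N : exists l, size l = N /\ T2 l.
Proof.
pose Zl := List.map pt (iota 0 N) ++
  flat_map (fun i => flat_map (fun u => pts bK yK u (pt i)) w) (iota 0 N).
have Zpt : forall i, i < N -> In (pt i) Zl.
  move=> i hi; apply/in_or_app; left; apply: in_map; apply: in_In.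
  by rewrite mem_iota.
have Zpts : forall i u p, i < N -> In u w -> In p (pts bK yK u (pt i)) -> In p Zl.
  move=> i u p hi hu hp; apply/in_or_app; right; apply/in_flat_map; exists i; split.
    by apply: in_In; rewrite mem_iota.
  by apply/in_flat_map; exists u.
have [M HM] := sep_list Zl.
pose D (i : 'I_k) (q : P M) : H :=
  match dec (exists p, In p Zl /\ piK M p = q) with
  | left h => FK i (proj1_sig (cid h))
  | right _ => gone
  end.
have D_pi : forall i p, In p Zl -> D i (piK M p) = FK i p.
  move=> i p hp; rewrite /D; case: (dec _) => [h|nh]; last by case: nh; exists p.
  have [h1 h2] := proj2_sig (cid h); by rewrite (HM _ _ h1 hp h2).
have [Phi HPhi] := @Ys_good M D.
pose l := mkseq (fun i => fun j => Phi j (piK M (pt i))) N.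
have nthl : forall i, i < N -> nth c0 l i = fun j => Phi j (piK M (pt i)).
  by move=> i hi; rewrite nth_mkseq.
have szl : size l = N by rewrite size_mkseq.
have hc : consis l.
  by move=> i i'; rewrite szl => hi hi' e; rewrite !nthl // e.
exists l; split => //; split => // i; rewrite szl => hi u hu hpts.
have := HPhi u hu.
rewrite (weval_wreath (K := P M)) => -[/(f_equal (fun f => f (piK M (pt i))))] /= <- _.
symmetry; apply: (hp_transfer (piK_hom M)).
- by move=> i'; rewrite /bK piK_psi.
- by move=> j; rewrite piK_y.
move=> p hp; split => [i'|j]; first by apply: D_pi; exact: Zpts hp.
have [i' [hi' <-]] := hpts p hp.
rewrite PhiL_pt ?szl // nthl //.
Qed.

Definition B2 := list C.
Lemma stage2_seq : exists sq : nat -> B2, forall N,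
  size (sq N) = N /\ T2 (sq N) /\ par2 (sq N.+1) = sq N.
Proof.
apply: (@koenig B2 size par2 T2).
- by move=> l _; rewrite size_par2.
- move=> m; apply: fin_lists; apply: fin_fun; [exact: fin_ord | exact: finH].
- exact: T2_ne.
- move=> l hl; exact: T2_down.
Qed.

Definition sq := proj1_sig (cid stage2_seq).
Lemma sq_spec N : size (sq N) = N /\ T2 (sq N) /\ par2 (sq N.+1) = sq N.
Proof. exact: (proj2_sig (cid stage2_seq) N). Qed.

Lemma sq_stable i N N' : i < N -> N <= N' -> nth c0 (sq N) i = nth c0 (sq N') i.
Proof.
move=> hi; elim: N' => [|N' IH]; first by rewrite leqn0 => /eqP e; subst N.
rewrite leq_eqVlt => /orP [/eqP ->//|]; rewrite ltnS => le.
rewrite IH // -(proj2 (proj2 (sq_spec N'))) nth_par2 //.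
by rewrite (proj1 (sq_spec N'.+1)) /=; apply: leq_trans le.
Qed.

Definition phiK (j : 'I_n) (z : K) : H :=
  match dec (exists i, pt i = z) with
  | left h => nth c0 (sq (proj1_sig (cid h)).+1) (proj1_sig (cid h)) j
  | right _ => gone
  end.

Lemma phiK_pt i N j : i < N -> phiK j (pt i) = nth c0 (sq N) i j.
Proof.
move=> hi; rewrite /phiK; case: (dec _) => [h|nh]; last by case: nh; exists i.
set c := proj1_sig (cid h); have hc : pt c = pt i := proj2_sig (cid h).
pose N' := maxn c.+1 N.
rewrite (@sq_stable c c.+1 N') ?leq_maxl //.
rewrite (@sq_stable i N N') ?leq_maxr //.
have [s1' [[hcons _] _]] := sq_spec N'.
rewrite (hcons c i) // s1'; [by rewrite leq_max ltnSn | by rewrite leq_max hi orbT].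
Qed.

Lemma stage2_H u z : In u w -> hp bK yK FK phiK u z = gone.
Proof.
move=> hu; case: (classic (inU z)) => [zU|nzU].
  have [i0 e0] := pt_surj zU; subst z.
  have [N0 HN0] := @bound_idx (pts bK yK u (pt i0)) (fun p hp =>
     pt_surj (let: ex_intro g (conj hg e) := pts_coset hp in
              eq_ind_r inU (inUM (inU_pt i0) hg) e)).
  pose N := maxn N0 i0.+1.
  have [szN [[hcN heN] _]] := sq_spec N.
  rewrite -(heN i0 _ u hu); first last.
  - move=> p hp; have [i' [hi' e]] := HN0 p hp; exists i'; split => //.
    by rewrite szN leq_max hi'.
  - by rewrite szN leq_max ltnSn orbT.
  apply: hp_local => p hp; split => // j.
  have [i' [hi' <-]] := HN0 p hp.
  rewrite PhiL_pt //; last by rewrite szN leq_max hi'.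
  by apply: phiK_pt; rewrite leq_max hi'.
apply: hp_triv => p hp.
have pU : ~ inU p.
  move=> hpU; apply: nzU; have [g [hg e]] := pts_coset hp.
  have -> : z = gmul p (ginv g) by rewrite e gmulK.
  by apply: inUM => //; apply: inUV.
split => [i|j].
  by rewrite /FK ext_out // => -[g hg]; apply: pU; rewrite -hg; exact: inU_psi.
rewrite /phiK; case: (dec _) => // -[i hi]; case: pU; rewrite -hi; exact: inU_pt.
Qed.

Lemma stage2_G u : In u w -> weval bK yK u = gone.
Proof.
move=> hu; apply: K_eq1 => m.
rewrite -(weval_hom (piK_hom m)).
have [Phi HPhi] := @Ys_good m (fun _ _ => gone).
have := HPhi u hu; rewrite (weval_wreath (K := P m)) => -[_ <-].
have e1 : (fun i => piK m (bK i)) = (fun i => psiP m (gG i)).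
  by apply: functional_extensionality => i; rewrite /bK piK_psi.
have e2 : (fun j => piK m (yK j)) = Ys m.
  by apply: functional_extensionality => j; rewrite piK_y.
by rewrite e1 e2.
Qed.

Lemma stage2 : exists x : 'I_n -> wreath H K, sys_holds w (fun i => wemb (a i)) x.
Proof.
exists (fun j => (phiK j, yK j)) => u hu.
have -> : (fun i => wemb (a i)) = (fun i => (FK i, bK i)) by [].
rewrite weval_wreath stage2_G //.
change ((hp bK yK FK phiK u, (gone : K)) = ((fun _ : K => (gone : H)), (gone : K))); f_equal.
by apply: functional_extensionality => z; rewrite stage2_H.
Qed.
End Stage2.

End Main.

Theorem theorem2 (H G : Grp) (k n : nat) (w : system k n) :
  finite_grp H -> finitely_generated G -> residually_finite G ->
  in_SysFin w -> solvable_over w (wreath H G).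
Proof.
move=> fH fg rf sw.
exists (wreath H (K fg rf)), (@wemb H G fg rf); split; first exact: iota_hom.
split; first exact: iota_inj.
move=> a; exact: (@stage2 H G k n w fH fg rf sw a).
Qed.
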